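(* Let $r_{\min}>0$ and let $P=(P_x,P_y,P_\theta)$ with $(P_x,P_y)\in\mathbb{R}^2$ and $P_\theta\in[0,2\pi)$ be a start configuration. Let $\mathcal{G}_\infty=\{(x,y)\in\mathbb{R}^2 : y=\mathcal{G}_y\}$ be a horizontal line with $\mathcal{G}_y>P_y$. Define $$m=\begin{cases}+1, & P_\theta\in[0,\tfrac{\pi}{2}]\cup[\tfrac{3\pi}{2},2\pi),\\ -1, & \text{otherwise},\end{cases}\qquad n=\begin{cases}0, & P_\theta\in[0,\tfrac{\pi}{2}],\\ \pi, & P_\theta\in(\tfrac{\pi}{2},\tfrac{3\pi}{2}],\\ 2\pi, & P_\theta\in(\tfrac{3\pi}{2},2\pi),\end{cases}$$ and $o_y=P_y+m\,r_{\min}\cos(P_\theta)$ (this is the $y$-coordinate of the center $o$ of the circle of radius $r_{\min}$ through $(P_x,P_y)$, tangent to the heading $P_\theta$, on which the vehicle rotates its heading toward $\pi/2$ by the shorter rotation). Consider all feasible paths (in the sense of the unicycle model below) starting at configuration $P$ and ending at any point of $\mathcal{G}_\infty$, with arbitrary final heading. Then a shortest such path exists and it is a Dubins path of the following form: 1. If $o_y\le \mathcal{G}_y$, it consists of a circular arc of radius $r_{\min}$ (turning the heading toward $\pi/2$ by the shorter rotation) followed by a straight segment, and the straight segment meets $\mathcal{G}_\infty$ at a right angle (i.e. has heading $\pi/2$). 2. If $o_y>\mathcal{G}_y$, it consists of a single circular arc of radius $r_{\min}$. Moreover, the length $h(P)$ of this shortest path is $$h(P)=\begin{cases} h_1(P)=r_{\min}\min\!\left(\left|P_\theta-\tfrac{\pi}{2}\right|,\left|P_\theta-\tfrac{5\pi}{2}\right|\right)+\mathcal{G}_y-o_y,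 & \text{if } o_y\le \mathcal{G}_y,\\[4pt] h_2(P)=r_{\min}\left|P_\theta-m\arccos\!\left(\dfrac{o_y-\mathcal{G}_y}{r_{\min}}\right)-n\right|, & \text{if } o_y>\mathcal{G}_y.\end{cases}$$
   Context: Vehicle model (forward-moving unicycle / Dubins car): a path is a curve $s\mapsto (x(s),y(s),\theta(s))$ parameterized by arc length $s\in[0,s_f]$ satisfying $\dot x(s)=\cos\theta(s)$, $\dot y(s)=\sin\theta(s)$, $\dot\theta(s)=\kappa(s)$ with $|\kappa(s)|\le \kappa_{\max}$, where derivatives are with respect to arc length and $r_{\min}=\kappa_{\max}^{-1}$ is the minimum turning radius. Such a path is called feasible; its length is $s_f$. Headings are angles in $[0,2\pi)$ measured from the positive $x$-axis. A Dubins path is a path composed of circular arcs of radius $r_{\min}$ (''C'') and straight line segments (''S''). In the application, $\mathcal{G}_\infty$ is the line containing a goal segment located ahead of the vehicle (hence $\mathcal{G}_y>P_y$), and $h(P)$ is used as an admissible heuristic for A* search. *)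

(* Defs.v *)
From Stdlib Require Import Reals Lra.
From Coquelicot Require Import Coquelicot.
Open Scope R_scope.

(* A candidate path s |-> (x s, y s, th s) on [0, sf], parameterized by arc length. *)
Record path := mkPath { sf : R; px : R -> R; py : R -> R; pth : R -> R }.

(* Feasibility for the forward unicycle with kmax = 1/rmin:
   x' = cos th, y' = sin th on [0,sf], and th' = kappa with |kappa| <= kmax,
   which we express as: th is (1/rmin)-Lipschitz on [0,sf]. *)
Definition feasible (rmin : R) (p : path) : Prop :=
  0 <= sf p /\
  (forall s, 0 <= s <= sf p -> is_derive (px p) s (cos (pth p s))) /\
  (forall s, 0 <= s <= sf p -> is_derive (py p) s (sin (pth p s))) /\
  (forall s1 s2, 0 <= s1 <= sf p -> 0 <= s2 <= sf p ->
     Rabs (pth p s1 - pth p s2) <= Rabs (s1 - s2) / rmin).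

Definition feasible_to_line (rmin Px Py Pth Gy : R) (p : path) : Prop :=
  feasible rmin p /\
  px p 0 = Px /\ py p 0 = Py /\ pth p 0 = Pth /\
  py p (sf p) = Gy.

Definition m_of (Pth : R) : R :=
  if Rle_dec Pth (PI/2) then 1 else if Rle_dec (3*PI/2) Pth then 1 else -1.

Definition n_of (Pth : R) : R :=
  if Rle_dec Pth (PI/2) then 0 else if Rle_dec Pth (3*PI/2) then PI else 2*PI.

Definition oy_of (rmin Py Pth : R) : R := Py + m_of Pth * rmin * cos Pth.

Definition h1 (rmin Py Pth Gy : R) : R :=
  rmin * Rmin (Rabs (Pth - PI/2)) (Rabs (Pth - 5*PI/2)) + Gy - oy_of rmin Py Pth.

Definition h2 (rmin Py Pth Gy : R) : R :=
  rmin * Rabs (Pth - m_of Pth * acos ((oy_of rmin Py Pth - Gy) / rmin) - n_of Pth).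

Definition arc_on (rmin sigma : R) (p : path) (a b : R) : Prop :=
  forall s, a <= s <= b -> pth p s = pth p a + sigma * (s - a) / rmin.

Definition form_arc_straight (rmin Pth : R) (p : path) : Prop :=
  exists s1, 0 <= s1 <= sf p /\
    arc_on rmin (m_of Pth) p 0 s1 /\
    (forall s, s1 <= s <= sf p -> pth p s = pth p s1) /\
    (exists k : Z, pth p s1 = PI/2 + 2 * IZR k * PI).

Definition form_single_arc (rmin : R) (p : path) : Prop :=
  exists sigma, (sigma = 1 \/ sigma = -1) /\ arc_on rmin sigma p 0 (sf p).

(* Main.v *)
Require Import Defs.
From Stdlib Require Import Reals Lra.
From Coquelicot Require Import Coquelicot.
Open Scope R_scope.

Lemma pw_deriv (g1 g2 d1 d2 : R -> R) x0 :
  (forall s, derivable_pt_lim g1 s (d1 s)) ->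
  (forall s, derivable_pt_lim g2 s (d2 s)) ->
  g1 x0 = g2 x0 -> d1 x0 = d2 x0 ->
  forall s, derivable_pt_lim (fun s => if Rle_dec s x0 then g1 s else g2 s) s
              (if Rle_dec s x0 then d1 s else d2 s).
Proof.
  intros H1 H2 HEg HEd s eps Heps.
  destruct (Rtotal_order s x0) as [Hlt|[Heq|Hgt]].
  - destruct (H1 s eps Heps) as [d Hd].
    assert (Hp : 0 < Rmin d (x0 - s)) by (apply Rmin_glb_lt; [apply cond_pos|lra]).
    exists (mkposreal _ Hp). intros h Hh Hha. simpl in Hha.
    assert (Ha1 : Rabs h < d) by (eapply Rlt_le_trans; [exact Hha| apply Rmin_l]).
    assert (Ha2 : Rabs h < x0 - s) by (eapply Rlt_le_trans; [exact Hha| apply Rmin_r]).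
    assert (h < x0 - s) by (eapply Rle_lt_trans; [apply RRle_abs|exact Ha2]).
    destruct (Rle_dec (s+h) x0); [|lra].
    destruct (Rle_dec s x0); [|lra].
    apply Hd; auto.
  - subst x0. destruct (H1 s eps Heps) as [da Hda]. destruct (H2 s eps Heps) as [db Hdb].
    assert (Hp : 0 < Rmin da db) by (apply Rmin_glb_lt; apply cond_pos).
    exists (mkposreal _ Hp). intros h Hh Hha. simpl in Hha.
    assert (Ha1 : Rabs h < da) by (eapply Rlt_le_trans; [exact Hha| apply Rmin_l]).
    assert (Ha2 : Rabs h < db) by (eapply Rlt_le_trans; [exact Hha| apply Rmin_r]).
    destruct (Rle_dec s s); [|lra].
    destruct (Rle_dec (s+h) s).
    + apply Hda; auto.
    + rewrite HEg, HEd. apply Hdb; auto.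
  - destruct (H2 s eps Heps) as [d Hd].
    assert (Hp : 0 < Rmin d (s - x0)) by (apply Rmin_glb_lt; [apply cond_pos|lra]).
    exists (mkposreal _ Hp). intros h Hh Hha. simpl in Hha.
    assert (Ha1 : Rabs h < d) by (eapply Rlt_le_trans; [exact Hha| apply Rmin_l]).
    assert (Ha2 : Rabs h < s - x0) by (eapply Rlt_le_trans; [exact Hha| apply Rmin_r]).
    assert (- h < s - x0) by (eapply Rle_lt_trans; [apply RRle_abs|rewrite Rabs_Ropp; exact Ha2]).
    destruct (Rle_dec (s+h) x0); [lra|].
    destruct (Rle_dec s x0); [lra|].
    apply Hd; auto.
Qed.

Lemma div_sign r A s : 0 < r -> A - s / r = (r * A - s) * / r.
Proof. intros; field; lra. Qed.

Lemma le_sub_div r A s : 0 < r -> s <= r * A -> 0 <= A - s / r.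
Proof. intros Hr H. rewrite div_sign by lra. apply Rmult_le_pos; [lra|].
  left; apply Rinv_0_lt_compat; lra. Qed.

Lemma lt_sub_div r A s : 0 < r -> r * A < s -> A - s / r < 0.
Proof. intros Hr H. rewrite div_sign by lra.
  assert (0 < / r) by (apply Rinv_0_lt_compat; lra). nra. Qed.

Lemma lt_sub_div' r A s : 0 < r -> s < r * A -> 0 < A - s / r.
Proof. intros Hr H. rewrite div_sign by lra.
  assert (0 < / r) by (apply Rinv_0_lt_compat; lra). nra. Qed.

Lemma div_nonneg r s : 0 < r -> 0 <= s -> 0 <= s / r.
Proof. intros. unfold Rdiv. apply Rmult_le_pos; [lra|]. left; apply Rinv_0_lt_compat; lra. Qed.

Definition cx r Px m A s := if Rle_dec s (r*A) then Px + m*r*(cos(A - s/r) - cos A)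
                            else Px + m*r*(1 - cos A).
Definition cy r Py A s := if Rle_dec s (r*A) then Py + r*(sin A - sin(A - s/r))
                          else Py + r*sin A + (s - r*A).
Definition cth r m T A s := T - m * Rmax (A - s/r) 0.

Lemma rA_div r A : 0 < r -> A - r * A / r = 0.
Proof. intros; field; lra. Qed.

Lemma cx_deriv r Px m A : 0 < r -> forall s,
  derivable_pt_lim (cx r Px m A) s (if Rle_dec s (r*A) then m*sin(A - s/r) else 0).
Proof.
  intros Hr s. unfold cx.
  apply (pw_deriv (fun s => Px + m*r*(cos(A - s/r) - cos A)) (fun s => Px + m*r*(1 - cos A))
           (fun s => m*sin(A - s/r)) (fun _ => 0)).
  - intro t. apply is_derive_Reals. auto_derive; auto.
    replace (A + - (t * / r)) with (A - t/r) by (unfold Rminus, Rdiv; ring). field; lra.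
  - intro t. apply is_derive_Reals. auto_derive; auto; try ring.
  - simpl. rewrite rA_div, cos_0 by lra. ring.
  - simpl. rewrite rA_div, sin_0 by lra. ring.
Qed.

Lemma cy_deriv r Py A : 0 < r -> forall s,
  derivable_pt_lim (cy r Py A) s (if Rle_dec s (r*A) then cos(A - s/r) else 1).
Proof.
  intros Hr s. unfold cy.
  apply (pw_deriv (fun s => Py + r*(sin A - sin(A - s/r))) (fun s => Py + r*sin A + (s - r*A))
           (fun s => cos(A - s/r)) (fun _ => 1)).
  - intro t. apply is_derive_Reals. auto_derive; auto.
    replace (A + - (t * / r)) with (A - t/r) by (unfold Rminus, Rdiv; ring). field; lra.
  - intro t. apply is_derive_Reals. auto_derive; auto; try ring.
  - simpl. rewrite rA_div, sin_0 by lra. ring.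
  - simpl. rewrite rA_div, cos_0 by lra. ring.
Qed.

Lemma cos_cth r m T A s : 0 < r -> (m = 1 \/ m = -1) -> sin T = 1 -> cos T = 0 ->
  cos (cth r m T A s) = if Rle_dec s (r*A) then m*sin(A - s/r) else 0.
Proof.
  intros Hr Hm HsT HcT. unfold cth. destruct (Rle_dec s (r*A)) as [h|h].
  - rewrite Rmax_left by (apply le_sub_div; lra).
    rewrite cos_minus, HsT, HcT.
    destruct Hm; subst m.
    + replace (1 * (A - s/r)) with (A - s/r) by ring. ring.
    + replace (-1 * (A - s/r)) with (- (A - s/r)) by ring. rewrite sin_neg. ring.
  - rewrite Rmax_right by (left; apply lt_sub_div; lra).
    replace (T - m * 0) with T by ring. exact HcT.
Qed.

Lemma sin_cth r m T A s : 0 < r -> (m = 1 \/ m = -1) -> sin T = 1 -> cos T = 0 ->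
  sin (cth r m T A s) = if Rle_dec s (r*A) then cos(A - s/r) else 1.
Proof.
  intros Hr Hm HsT HcT. unfold cth. destruct (Rle_dec s (r*A)) as [h|h].
  - rewrite Rmax_left by (apply le_sub_div; lra).
    rewrite sin_minus, HsT, HcT.
    destruct Hm; subst m.
    + replace (1 * (A - s/r)) with (A - s/r) by ring. ring.
    + replace (-1 * (A - s/r)) with (- (A - s/r)) by ring. rewrite cos_neg. ring.
  - rewrite Rmax_right by (left; apply lt_sub_div; lra).
    replace (T - m * 0) with T by ring. exact HsT.
Qed.

Lemma cth_lip r m T A s1 s2 : 0 < r -> (m = 1 \/ m = -1) ->
  Rabs (cth r m T A s1 - cth r m T A s2) <= Rabs (s1 - s2) / r.
Proof.
  intros Hr Hm. unfold cth.
  replace (Rabs (s1 - s2) / r) with (Rabs (s1/r - s2/r)).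
  2:{ replace (s1/r - s2/r) with ((s1 - s2) / r) by (field; lra).
      unfold Rdiv. rewrite Rabs_mult, (Rabs_right (/ r)); [reflexivity|].
      left; apply Rinv_0_lt_compat; lra. }
  set (a := s1 / r). set (b := s2 / r).
  unfold Rmax. destruct Hm; subst m;
  destruct (Rle_dec (A - a) 0); destruct (Rle_dec (A - b) 0);
  unfold Rabs; repeat destruct Rcase_abs; lra.
Qed.

Lemma cos_le_aux c w : 0 <= c <= PI -> c <= w <= 2*PI - c -> cos w <= cos c.
Proof.
  intros Hc Hw. destruct (Rle_dec w PI).
  - destruct (Req_dec c w). subst; lra.
    left; apply cos_decreasing_1; lra.
  - assert (E : cos w = cos (2*PI - w)) by (rewrite cos_minus, cos_2PI, sin_2PI; ring).
    rewrite E. destruct (Req_dec c (2*PI - w)). rewrite <- H; lra.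
    left; apply cos_decreasing_1; lra.
Qed.

Lemma head_bound r m T A th0 psi s : 0 < r -> (m = 1 \/ m = -1) -> sin T = 1 -> cos T = 0 ->
  0 <= A <= PI -> th0 = T - m * A -> 0 <= s -> Rabs (psi - th0) <= s / r ->
  sin psi <= if Rle_dec s (r*A) then cos(A - s/r) else 1.
Proof.
  intros Hr Hm HsT HcT HA Hth Hs Hpsi.
  destruct (Rle_dec s (r*A)) as [h|h]; [|apply SIN_bound].
  assert (Hc := le_sub_div r A s Hr h).
  assert (Ht := div_nonneg r s Hr Hs).
  set (t := s / r) in *.
  assert (E : sin psi = cos (T - psi)) by (rewrite cos_minus, HsT, HcT; ring).
  rewrite E. unfold Rabs in Hpsi. destruct (Rcase_abs (psi - th0)) in Hpsi.
  all: destruct Hm; subst m; [apply cos_le_aux; lra | rewrite <- cos_neg; apply cos_le_aux; lra].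
Qed.

Lemma asin_facts k A : 0 < k -> k < sin A -> 0 <= A <= PI ->
  0 < asin k /\ asin k < A /\ sin (asin k) = k /\ asin k < PI/2.
Proof.
  intros Hk HkA HA.
  assert (H1 : -1 < k < 1) by (pose proof (SIN_bound A); lra).
  destruct (asin_bound_lt k H1) as [Hb1 Hb2].
  assert (Hs : sin (asin k) = k) by (apply sin_asin; lra).
  split; [|split; [|split; auto]].
  - destruct (Rtotal_order (asin k) 0) as [h|[h|h]]; auto.
    + assert (sin (asin k) < sin 0) by (apply sin_increasing_1; lra). rewrite sin_0 in H; lra.
    + rewrite h, sin_0 in Hs; lra.
  - destruct (Rle_dec (PI/2) A). lra.
    destruct (Rtotal_order (asin k) A) as [h|[h|h]]; auto.
    + rewrite h in Hs; lra.
    + assert (sin A < sin (asin k)) by (apply sin_increasing_1; lra). lra.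
Qed.

Lemma div_lt_of r L B : 0 < r -> L < r * B -> L / r < B.
Proof. intros Hr H. apply (Rmult_lt_reg_l r); auto. replace (r * (L / r)) with L by (field; lra). auto. Qed.

Lemma Y_lt1 r Py A Gy L : 0 < r -> 0 <= A <= PI -> Py + r * sin A <= Gy -> 0 < L ->
  L < r*A + Gy - (Py + r*sin A) -> cy r Py A L < Gy.
Proof.
  intros Hr HA Ho HL HL2. unfold cy. destruct (Rle_dec L (r*A)) as [h|h]; [|lra].
  destruct h as [h|h].
  - assert (Hu := lt_sub_div' r A L Hr h).
    assert (Hu2 : A - L / r < PI).
    { assert (0 < L / r) by (unfold Rdiv; apply Rmult_lt_0_compat; [lra| apply Rinv_0_lt_compat; lra]). lra. }
    assert (0 < sin (A - L/r)) by (apply sin_gt_0; lra).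
    assert (0 < r * sin (A - L/r)) by (apply Rmult_lt_0_compat; lra). lra.
  - subst L. rewrite rA_div, sin_0 by lra. lra.
Qed.

Lemma Y_lt2 r Py A Gy L : 0 < r -> 0 <= A <= PI -> Py < Gy -> Gy < Py + r * sin A -> 0 <= L ->
  L < r * (A - asin ((Py + r * sin A - Gy) / r)) -> cy r Py A L < Gy.
Proof.
  intros Hr HA HG Ho HL HL2. set (k := (Py + r * sin A - Gy) / r) in *.
  assert (Ek : r * k = Py + r * sin A - Gy) by (unfold k; field; lra).
  assert (Hk0 : 0 < k) by (apply (Rmult_lt_reg_l r); lra).
  assert (Hk1 : k < sin A) by (apply (Rmult_lt_reg_l r); lra).
  destruct (asin_facts k A Hk0 Hk1 HA) as (Ha1 & Ha2 & Ha3 & Ha4).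
  assert (Hu := div_lt_of r L _ Hr HL2).
  assert (HLr : L <= r * A) by (assert (0 < r * asin k) by (apply Rmult_lt_0_compat; lra); nra).
  unfold cy. destruct (Rle_dec L (r*A)) as [_|h]; [|lra].
  assert (Hs : k < sin (A - L/r)).
  { assert (0 <= L / r) by (apply div_nonneg; lra).
    destruct (Rle_dec (A - L/r) (PI/2)).
    - rewrite <- Ha3 at 1. apply sin_increasing_1; lra.
    - destruct (Req_dec (A - L/r) A) as [e|e]. rewrite e; lra.
      assert (sin A < sin (A - L/r)) by (apply sin_decreasing_1; lra). lra. }
  assert (r * k < r * sin (A - L / r)) by (apply Rmult_lt_compat_l; lra). lra.
Qed.

Definition Lstar r Py A Gy :=
  if Rle_dec (Py + r*sin A) Gy then r*A + Gy - (Py + r*sin A)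
  else r*(A - asin((Py + r*sin A - Gy)/r)).

Definition cand r Px Py m T A Gy :=
  mkPath (Lstar r Py A Gy) (cx r Px m A) (cy r Py A) (cth r m T A).

Lemma cy0 r Py A : 0 < r -> 0 <= A -> cy r Py A 0 = Py.
Proof. intros Hr HA. unfold cy. destruct (Rle_dec 0 (r*A)) as [_|h].
  - replace (A - 0/r) with A by (field; lra). ring.
  - exfalso; apply h; apply Rmult_le_pos; lra. Qed.

Lemma Lstar_props r Py A Gy : 0 < r -> 0 <= A <= PI -> Py < Gy ->
  0 <= Lstar r Py A Gy /\ cy r Py A (Lstar r Py A Gy) = Gy /\
  (forall L, 0 <= L < Lstar r Py A Gy -> cy r Py A L < Gy).
Proof.
  intros Hr HA HG. unfold Lstar.
  destruct (Rle_dec (Py + r*sin A) Gy) as [Ho|Ho].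
  - assert (0 <= r * A) by (apply Rmult_le_pos; lra).
    split; [lra|split].
    + unfold cy. destruct (Rle_dec (r * A + Gy - (Py + r * sin A)) (r*A)).
      * replace (r * A + Gy - (Py + r * sin A)) with (r*A) by lra.
        rewrite rA_div, sin_0 by lra. lra.
      * lra.
    + intros L [HL1 HL2]. destruct HL1 as [HL1|HL1].
      * apply Y_lt1; lra.
      * subst L. rewrite cy0; lra.
  - set (k := (Py + r * sin A - Gy) / r).
    assert (Ek : r * k = Py + r * sin A - Gy) by (unfold k; field; lra).
    assert (Hk0 : 0 < k) by (apply (Rmult_lt_reg_l r); lra).
    assert (Hk1 : k < sin A) by (apply (Rmult_lt_reg_l r); lra).
    destruct (asin_facts k A Hk0 Hk1 HA) as (Ha1 & Ha2 & Ha3 & Ha4).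
    assert (0 < r * (A - asin k)) by (apply Rmult_lt_0_compat; lra).
    split; [lra|split].
    + unfold cy. destruct (Rle_dec (r * (A - asin k)) (r*A)) as [_|h].
      * replace (A - r * (A - asin k) / r) with (asin k) by (field; lra).
        rewrite Ha3. lra.
      * exfalso; apply h. assert (0 < r * asin k) by (apply Rmult_lt_0_compat; lra). nra.
    + intros L HL. apply Y_lt2; try lra. change (L < r * (A - asin k)). lra.
Qed.

Lemma core_opt r Px Py th0 Gy m T A q : 0 < r -> (m = 1 \/ m = -1) -> sin T = 1 -> cos T = 0 ->
  0 <= A <= PI -> th0 = T - m * A -> Py < Gy ->
  feasible_to_line r Px Py th0 Gy q -> Lstar r Py A Gy <= sf q.
Proof.
  intros Hr Hm HsT HcT HA Hth HG [[Hsf [_ [Hdy Hlip]]] [_ [Hy0 [Hth0 HyL]]]].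
  destruct (Lstar_props r Py A Gy Hr HA HG) as (_ & _ & Hlt).
  destruct (Rle_dec (Lstar r Py A Gy) (sf q)) as [h|h]; auto. exfalso.
  destruct Hsf as [Hsf|Hsf].
  2:{ rewrite <- Hsf in HyL. lra. }
  set (L := sf q) in *.
  destruct (MVT_cor2 (fun s => cy r Py A s - py q s)
             (fun s => (if Rle_dec s (r*A) then cos(A - s/r) else 1) - sin (pth q s)) 0 L Hsf)
    as [c [Hc1 Hc2]].
  { intros c Hc. apply (derivable_pt_lim_minus (cy r Py A) (py q)).
    - apply cy_deriv; auto.
    - apply is_derive_Reals. apply Hdy. lra. }
  assert (Hb : sin (pth q c) <= if Rle_dec c (r*A) then cos(A - c/r) else 1).
  { apply (head_bound r m T A th0); auto; try lra.
    rewrite <- Hth0. replace (c / r) with (Rabs (c - 0) / r).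
    apply Hlip; lra. rewrite Rminus_0_r, Rabs_right; lra. }
  assert (0 <= ((if Rle_dec c (r*A) then cos(A - c/r) else 1) - sin (pth q c)) * (L - 0))
    by (apply Rmult_le_pos; lra).
  rewrite cy0 in Hc1 by lra.
  assert (cy r Py A L < Gy) by (apply Hlt; lra).
  lra.
Qed.

Lemma ge_sub_div r A s : 0 < r -> r * A <= s -> A - s / r <= 0.
Proof. intros Hr H. rewrite div_sign by lra.
  assert (0 < / r) by (apply Rinv_0_lt_compat; lra). nra. Qed.

Lemma cand_feasible r Px Py th0 Gy m T A : 0 < r -> (m = 1 \/ m = -1) -> sin T = 1 -> cos T = 0 ->
  0 <= A <= PI -> th0 = T - m * A -> Py < Gy ->
  feasible_to_line r Px Py th0 Gy (cand r Px Py m T A Gy).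
Proof.
  intros Hr Hm HsT HcT HA Hth HG.
  destruct (Lstar_props r Py A Gy Hr HA HG) as (H0 & H1 & _).
  unfold feasible_to_line, feasible, cand; simpl.
  split; [split; [auto|split; [|split]]|split; [|split; [|split]]].
  - intros s _. apply is_derive_Reals. rewrite cos_cth by auto. apply cx_deriv; auto.
  - intros s _. apply is_derive_Reals. rewrite sin_cth by auto. apply cy_deriv; auto.
  - intros s1 s2 _ _. apply cth_lip; auto.
  - unfold cx. destruct (Rle_dec 0 (r*A)) as [_|h].
    + replace (A - 0/r) with A by (field; lra). ring.
    + exfalso; apply h; apply Rmult_le_pos; lra.
  - apply cy0; lra.
  - unfold cth. rewrite Rmax_left. replace (A - 0/r) with A by (field; lra). auto.
    replace (A - 0/r) with A by (field; lra). lra.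
  - auto.
Qed.

Lemma finish r Px Py Pth Gy m T A n (k0 : Z) :
  0 < r -> (m = 1 \/ m = -1) -> sin T = 1 -> cos T = 0 ->
  0 <= A <= PI -> Pth = T - m * A -> Py < Gy ->
  m_of Pth = m -> n_of Pth = n -> T = PI/2 + 2 * IZR k0 * PI ->
  Rmin (Rabs (Pth - PI/2)) (Rabs (Pth - 5*PI/2)) = A ->
  (0 < sin A -> forall x, 0 < x < A -> Rabs (Pth - m * (PI/2 - x) - n) = A - x) ->
  exists p : path,
    feasible_to_line r Px Py Pth Gy p /\
    (forall q : path, feasible_to_line r Px Py Pth Gy q -> sf p <= sf q) /\
    (oy_of r Py Pth <= Gy ->
       form_arc_straight r Pth p /\ sf p = h1 r Py Pth Gy) /\
    (Gy < oy_of r Py Pth ->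
       form_single_arc r p /\ sf p = h2 r Py Pth Gy).
Proof.
  intros Hr Hm HsT HcT HA Hth HG Hmo Hno HT Hmin Hh2.
  assert (Hoy : oy_of r Py Pth = Py + r * sin A).
  { unfold oy_of. rewrite Hmo, Hth, cos_minus, HsT, HcT.
    destruct Hm; subst m.
    - replace (1 * A) with A by ring. ring.
    - replace (-1 * A) with (- A) by ring. rewrite sin_neg, cos_neg. ring. }
  exists (cand r Px Py m T A Gy).
  split; [apply cand_feasible; auto|split].
  { intros q Hq. apply (core_opt r Px Py Pth Gy m T A q); auto. }
  assert (HrA : 0 <= r * A) by (apply Rmult_le_pos; lra).
  split.
  - intro Ho. rewrite Hoy in Ho.
    assert (EL : Lstar r Py A Gy = r*A + Gy - (Py + r*sin A))
      by (unfold Lstar; destruct Rle_dec; [reflexivity|contradiction]).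
    split.
    + exists (r*A). unfold cand; simpl. rewrite EL. split; [lra|split; [|split]].
      * intros s Hs. rewrite Hmo. simpl. unfold cth.
        rewrite !Rmax_left; try (apply le_sub_div; lra).
        replace (A - 0/r) with A by (field; lra). field; lra.
      * intros s Hs. unfold cth. rewrite !Rmax_right; try (apply ge_sub_div; lra). reflexivity.
      * exists k0. unfold cth. rewrite Rmax_right by (apply ge_sub_div; lra).
        rewrite <- HT. ring.
    + unfold h1. simpl. rewrite EL, Hmin, Hoy. ring.
  - intro Ho. rewrite Hoy in Ho.
    set (k := (Py + r * sin A - Gy) / r).
    assert (EL : Lstar r Py A Gy = r * (A - asin k))
      by (unfold Lstar; destruct Rle_dec; [lra|reflexivity]).
    assert (Ek : r * k = Py + r * sin A - Gy) by (unfold k; field; lra).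
    assert (Hk0 : 0 < k) by (apply (Rmult_lt_reg_l r); lra).
    assert (Hk1 : k < sin A) by (apply (Rmult_lt_reg_l r); lra).
    destruct (asin_facts k A Hk0 Hk1 HA) as (Ha1 & Ha2 & Ha3 & Ha4).
    assert (HLA : r * (A - asin k) <= r * A)
      by (assert (0 < r * asin k) by (apply Rmult_lt_0_compat; lra); nra).
    split.
    + exists m. split; auto. unfold cand, arc_on; simpl. rewrite EL.
      intros s Hs. simpl. unfold cth.
      rewrite !Rmax_left; try (apply le_sub_div; lra).
      replace (A - 0/r) with A by (field; lra). field; lra.
    + unfold h2. simpl. rewrite EL, Hmo, Hno, Hoy. fold k.
      rewrite acos_asin by (pose proof (SIN_bound A); lra).
      rewrite (Hh2 ltac:(lra) (asin k)) by lra. reflexivity.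
Qed.

Theorem mainTheorem1 (rmin Px Py Pth Gy : R)
  (Hr : 0 < rmin) (Hth : 0 <= Pth < 2 * PI) (HG : Py < Gy) :
  exists p : path,
    feasible_to_line rmin Px Py Pth Gy p /\
    (forall q : path, feasible_to_line rmin Px Py Pth Gy q -> sf p <= sf q) /\
    (oy_of rmin Py Pth <= Gy ->
       form_arc_straight rmin Pth p /\ sf p = h1 rmin Py Pth Gy) /\
    (Gy < oy_of rmin Py Pth ->
       form_single_arc rmin p /\ sf p = h2 rmin Py Pth Gy).
Proof.
  pose proof PI_RGT_0 as Hpi.
  destruct (Rle_dec Pth (PI/2)) as [Ha|Ha].
  - apply (finish rmin Px Py Pth Gy 1 (PI/2) (PI/2 - Pth) 0 0%Z); auto.
    + rewrite sin_PI2; auto.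
    + rewrite cos_PI2; auto.
    + lra.
    + ring.
    + unfold m_of. destruct (Rle_dec Pth (PI/2)); [reflexivity|lra].
    + unfold n_of. destruct (Rle_dec Pth (PI/2)); [reflexivity|lra].
    + simpl. ring.
    + unfold Rmin, Rabs; repeat destruct Rcase_abs; destruct Rle_dec; lra.
    + intros _ x Hx. unfold Rabs; destruct Rcase_abs; lra.
  - destruct (Rle_dec (3*PI/2) Pth) as [Hc|Hc].
    + assert (ET : PI/2 + 2 * IZR 1 * PI = PI/2 + 2 * INR 1 * PI) by (simpl; ring).
      apply (finish rmin Px Py Pth Gy 1 (PI/2 + 2 * IZR 1 * PI) (5*PI/2 - Pth) (n_of Pth) 1%Z); auto.
      * rewrite ET, sin_period, sin_PI2; auto.
      * rewrite ET, cos_period, cos_PI2; auto.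
      * lra.
      * simpl; field.
      * unfold m_of. destruct (Rle_dec Pth (PI/2)); [lra|].
        destruct (Rle_dec (3*PI/2) Pth); [reflexivity|lra].
      * unfold Rmin, Rabs; repeat destruct Rcase_abs; destruct Rle_dec; lra.
      * intros Hs x Hx.
        assert (HA : 5*PI/2 - Pth <> PI).
        { intro E. rewrite E, sin_PI in Hs. lra. }
        unfold n_of. destruct (Rle_dec Pth (PI/2)); [lra|].
        destruct (Rle_dec Pth (3*PI/2)); [lra|].
        unfold Rabs; destruct Rcase_abs; lra.
    + apply (finish rmin Px Py Pth Gy (-1) (PI/2) (Pth - PI/2) PI 0%Z); auto.
      * rewrite sin_PI2; auto.
      * rewrite cos_PI2; auto.
      * lra.
      * ring.
      * unfold m_of. destruct (Rle_dec Pth (PI/2)); [lra|].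
        destruct (Rle_dec (3*PI/2) Pth); [lra|reflexivity].
      * unfold n_of. destruct (Rle_dec Pth (PI/2)); [lra|].
        destruct (Rle_dec Pth (3*PI/2)); [reflexivity|lra].
      * simpl. ring.
      * unfold Rmin, Rabs; repeat destruct Rcase_abs; destruct Rle_dec; lra.
      * intros _ x Hx. unfold Rabs; destruct Rcase_abs; lra.
Qed.
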